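(* Let $(Q,B,\mu)$ be a measure space with a non-trivial $\sigma$-finite measure $\mu$, let $0<a<b\le1$, and let $\psi:(a,b)\to(0,\infty)$ be continuous with $\inf_{p\in(a,b)}\psi(p)>0$. Then the quasi-Grand Lebesgue space $G\psi_{a,b}$ is complete with respect to the quasi-distance $\rho(x,y)=\|x-y\|_{G\psi_{a,b}}$; i.e. every Cauchy sequence for $\rho$ converges in $\rho$ to an element of $G\psi_{a,b}$.
   Context: For $p>0$, $\|f\|_p=\left(\int_Q|f|^p\,d\mu\right)^{1/p}$. $G\psi_{a,b}$ is the space of measurable $f:Q\to\mathbb R$ (modulo $\mu$-a.e. equality) with $\|f\|_{G\psi_{a,b}}:=\sup_{p\in(a,b)}\|f\|_p/\psi(p)<\infty$. *)

(* Defs.v *)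
From mathcomp Require Import all_boot all_order all_algebra.
From mathcomp Require Import all_classical all_reals all_analysis.
Import Order.TTheory GRing.Theory Num.Theory numFieldNormedType.Exports.
Local Open Scope classical_set_scope.
Local Open Scope ring_scope.

Definition Gnorm {d} {T : measurableType d} {R : realType}
  (mu : {measure set T -> \bar R}) (a b : R) (psi : R -> R) (f : T -> R) : \bar R :=
  ereal_sup [set (Lnorm mu p%:E (EFin \o f) * ((psi p)^-1)%:E)%E
            | p in [set p : R | a < p < b]].

(* Main.v *)
Require Import Defs.
From mathcomp Require Import all_boot all_order all_algebra.
From mathcomp Require Import all_classical all_reals all_analysis.
From mathcomp Require Import ring lra measurable_realfun.
Import Order.TTheory GRing.Theory Num.Theory numFieldNormedType.Exports.
Local Open Scope classical_set_scope.
Local Open Scope ring_scope.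
Set Implicit Arguments.

Section helpers.
Context d (T : measurableType d) (R : realType) (mu : {measure set T -> \bar R}).
Local Open Scope ereal_scope.

Definition Ip (p : R) (h : T -> R) := \int[mu]_x ((`|h x| `^ p)%R)%:E.

Lemma LnormE p h : Lnorm mu p%:E (EFin \o h) = Ip p h `^ p^-1.
Proof.
rewrite unlock /Ip; congr poweR; apply: eq_integral => x _.
all: by rewrite /= ?poweR_EFin.
Qed.

Lemma Ip_ge0 p h : 0 <= Ip p h.
Proof. by apply: integral_ge0 => x _; rewrite lee_fin powR_ge0. Qed.

Lemma Lnorm_le_Ip p h K : (0 < p)%R -> (0 <= K)%R ->
  Ip p h <= ((K `^ p)%R)%:E -> Lnorm mu p%:E (EFin \o h) <= K%:E.
Proof.
move=> p0 K0 hI; rewrite LnormE.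
apply: (@le_trans _ _ (((K `^ p)%R)%:E `^ p^-1)).
  apply: gt0_ler_poweR => //.
  - by rewrite invr_ge0 ltW.
  - by rewrite in_itv /= Ip_ge0 leey.
  - by rewrite in_itv /= lee_fin powR_ge0 leey.
by rewrite poweR_EFin -powRrM mulfV ?gt_eqF// powRr1.
Qed.

Lemma Ip_le_Lnorm p h K : (0 < p)%R -> (0 <= K)%R ->
  Lnorm mu p%:E (EFin \o h) <= K%:E -> Ip p h <= ((K `^ p)%R)%:E.
Proof.
move=> p0 K0 hN.
have -> : Ip p h = Lnorm mu p%:E (EFin \o h) `^ p.
  by rewrite poweR_Lnorm ?gt_eqF.
rewrite -poweR_EFin; apply: gt0_ler_poweR => //.
- exact: ltW.
- by rewrite in_itv /= Lnorm_ge0 leey.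
- by rewrite in_itv /= lee_fin K0 leey.
Qed.


Lemma Gnorm_le (a b : R) (psi : R -> R) h (x : R) :
  (forall p, (a < p < b)%R -> (0 < psi p)%R) ->
  (forall p, (a < p < b)%R -> Lnorm mu p%:E (EFin \o h) <= (x * psi p)%:E) ->
  Gnorm mu a b psi h <= x%:E.
Proof.
move=> hpos hN; apply: ub_ereal_sup => _ [p hp <-].
have ps := hpos p hp.
rewrite (_ : x = x * psi p * (psi p)^-1)%R; last by rewrite -mulrA mulfV ?gt_eqF// mulr1.
rewrite EFinM; apply: lee_wpmul2r; first by rewrite lee_fin invr_ge0 ltW.
exact: hN.
Qed.

Lemma le_Gnorm (a b : R) (psi : R -> R) h (x : R) p :
  (0 < psi p)%R -> (a < p < b)%R ->
  Gnorm mu a b psi h <= x%:E -> Lnorm mu p%:E (EFin \o h) <= (x * psi p)%:E.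
Proof.
move=> ps hp hG.
have : Lnorm mu p%:E (EFin \o h) * ((psi p)^-1)%:E <= x%:E.
  apply: le_trans hG; apply: ereal_sup_ubound; by exists p.
move=> /(@lee_wpmul2r _ (psi p)%:E); rewrite lee_fin (ltW ps) => /(_ isT).
by rewrite -muleA -EFinM mulVf ?gt_eqF// mule1 -EFinM.
Qed.

End helpers.

Lemma powR_tri (R : realType) (p y z : R) : (0 < p)%R -> (p <= 1)%R ->
  (`|y + z| `^ p <= 2 * (`|y| `^ p + `|z| `^ p))%R.
Proof.
move=> p0 p1.
have key : forall y z : R, `|y| <= `|z| -> `|y + z| `^ p <= 2 * (`|y| `^ p + `|z| `^ p).
  move=> {}y {}z yz.
  have h1 : `|y + z| <= 2 * `|z| by rewrite (le_trans (ler_normD _ _))// mulr2n mulrDl mul1r lerD2r.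
  apply: (le_trans (ge0_ler_powR (ltW p0) _ _ h1)); rewrite ?nnegrE//.
  rewrite powRM// ler_pM//.
    by rewrite -[leRHS]powRr1 // ler_powR // ler1n.
  by rewrite lerDr powR_ge0.
case: (leP `|y| `|z|) => yz; first exact: key.
by rewrite addrC [X in _ * X]addrC; apply: key; exact: ltW.
Qed.


Lemma powR_cont (R : realType) (p l : R) : (0 < p)%R -> (0 < l)%R ->
  {for l, continuous (fun x : R => x `^ p)}.
Proof.
move=> p0 l0.
have e : \forall x \near l, expR (p * ln x) = x `^ p.
  near=> x; rewrite /powR gt_eqF//; near: x; exact: lt_nbhsr.
have h : (fun x => expR (p * ln x)) @ l --> l `^ p.
  rewrite /powR gt_eqF//.
  have hl : (fun x => p * ln x) @ l --> p * ln l.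
    apply: cvgM; [exact: cvg_cst | exact: continuous_ln].
  exact: (cvg_comp (fun x => p * ln x) expR hl (@continuous_expR R (p * ln l))).
apply: (cvg_trans _ h); exact: near_eq_cvg e.
Unshelve. all: by end_near. Qed.

Lemma powR_cvg_seq (R : realType) (p l : R) (y : nat -> R) : (0 < p)%R ->
  (forall k, 0 <= y k)%R -> y @ \oo --> l -> (fun k => y k `^ p) @ \oo --> l `^ p.
Proof.
move=> p0 y0 hy.
have l0 : (0 <= l)%R.
  apply: (closed_cvg [set x : R | 0 <= x]%R _ _ _ hy).
  - exact: closed_ge.
  - by apply: nearW.
case: (ltP 0%R l) => l0'.
  have hc := @powR_cont R p l p0 l0'.
  exact: (cvg_comp y (fun x => x `^ p) hy hc).
move: hy; have -> : l = 0%R by apply/eqP; rewrite eq_le l0 l0'.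
move=> hy; rewrite powR0 ?gt_eqF//.
apply/cvgrPdist_lt => e e0.
have d0 : (0 < e `^ p^-1)%R by rewrite powR_gt0.
move/cvgrPdist_lt : hy => /(_ _ d0); apply: filterS => k.
rewrite sub0r normrN ger0_norm ?y0// sub0r normrN ger0_norm ?powR_ge0// => hk.
have := gt0_ltr_powR p0 (y0 k) (ltW d0) hk.
by rewrite -powRrM mulVf ?gt_eqF// powRr1 ?ltW.
Qed.

Lemma cauchy_geo (R : realType) (g : nat -> R) (K : nat) :
  (forall k, (K <= k)%N -> `|g k.+1 - g k| < (2^-1)^+k.+1) -> cvgn g.
Proof.
move=> hg.
have tel : forall n j, (K <= n)%N -> `|g (n + j)%N - g n| <= (2^-1)^+n - (2^-1)^+(n + j).
  move=> n j Kn; elim: j => [|j ih]; first by rewrite addn0 !subrr normr0.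
  rewrite addnS.
  have -> : g (n + j).+1 - g n = (g (n + j).+1 - g (n + j)%N) + (g (n + j)%N - g n) by ring.
  apply: (le_trans (ler_normD _ _)).
  have h1 := hg (n + j)%N (leq_trans Kn (leq_addr _ _)).
  rewrite exprS in h1 *.
  set X := (2^-1)^+(n + j) in h1 ih *.
  lra.
apply/cauchy_cvgP/cauchy_exP => e e0.
have H : \forall n \near \oo, (K <= n)%N /\ (2:R)^-1^+n < e.
  near=> n; split; first by near: n; exists K.
  near: n.
  have := @cvg_expr R (2^-1); rewrite ger0_norm ?invr_ge0 ?ler0n// invf_lt1 ?ltr1n// => /(_ isT).
  move/cvgrPdist_lt => /(_ _ e0); apply: filterS => n.
  by rewrite sub0r normrN ger0_norm // exprn_ge0 // invr_ge0 ler0n.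
have [n [Kn hn]] := filter_ex H.
exists (g n); exists n => // m /= nm.
rewrite -ball_normE /ball_ /= distrC -(subnKC nm).
apply: (le_lt_trans (tel _ _ Kn)).
rewrite ltrBlDr; apply: (lt_le_trans hn); rewrite lerDl exprn_ge0 // invr_ge0 ler0n.
Unshelve. all: by end_near. Qed.

Fixpoint upseq (Nf : nat -> nat) (k : nat) : nat :=
  if k is k'.+1 then (maxn (upseq Nf k') (Nf k)).+1 else Nf 0%N.

Lemma upseq_ge Nf k : (Nf k <= upseq Nf k)%N.
Proof. by case: k => [|k] //=; rewrite ltnW // ltnS leq_maxr. Qed.

Lemma upseq_S Nf k : (upseq Nf k <= upseq Nf k.+1)%N.
Proof. by rewrite /= ltnW // ltnS leq_maxl. Qed.

Lemma upseq_k Nf k : (k <= upseq Nf k)%N.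
Proof.
elim: k => [|k ih] //=; by rewrite ltnS (leq_trans ih) // leq_maxl.
Qed.

Lemma upseq_mono Nf : {homo upseq Nf : m n / (m <= n)%N}.
Proof. by apply: homo_leq => //; [exact: leq_trans | exact: upseq_S]. Qed.

Unset Implicit Arguments.

Theorem theorem4p2 (d : measure_display) (T : measurableType d) (R : realType)
  (mu : {measure set T -> \bar R})
  (hsigma : sigma_finite [set: T] mu)
  (hnontriv : (0 < mu [set: T])%E)
  (a b : R) (ha : 0 < a) (hab : a < b) (hb1 : b <= 1)
  (psi : R -> R)
  (hcont : forall p, a < p < b -> {for p, continuous psi})
  (hpos : forall p, a < p < b -> 0 < psi p)
  (hinf : exists c : R, 0 < c /\ forall p, a < p < b -> c <= psi p)
  (u : nat -> T -> R)
  (hu_meas : forall n, measurable_fun [set: T] (u n))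
  (hu_fin : forall n, (Gnorm mu a b psi (u n) < +oo)%E)
  (hcauchy : forall e : R, 0 < e -> exists N : nat, forall m n : nat,
      (N <= m)%N -> (N <= n)%N -> (Gnorm mu a b psi (fun x => (u n x - u m x)%R) < e%:E)%E) :
  exists f : T -> R,
    [/\ measurable_fun [set: T] f,
        (Gnorm mu a b psi f < +oo)%E &
        forall e : R, 0 < e -> exists N : nat, forall n : nat,
          (N <= n)%N -> (Gnorm mu a b psi (fun x => (u n x - f x)%R) < e%:E)%E].
Proof.
have ppos : forall p, a < p < b -> 0 < p.
  by move=> p /andP[ap _]; exact: lt_trans ap.
have H1 : forall e, 0 < e -> exists N, forall m n, (N <= m)%N -> (N <= n)%N ->
    forall p, a < p < b ->
    (Ip mu p (fun x => (u n x - u m x)%R) <= (((e * psi p) `^ p)%R)%:E)%E.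
  move=> e e0; have [N hN] := hcauchy e e0; exists N => m n Nm Nn p hp.
  apply: Ip_le_Lnorm; first exact: ppos.
    by rewrite mulr_ge0 // ltW // hpos.
  exact: (le_Gnorm mu _ _ _ _ _ _ (hpos p hp) hp (ltW (hN m n Nm Nn))).
set p0 := (a + b) / 2.
have hp0 : a < p0 < b by apply/andP; split; rewrite /p0; lra.
have p0pos : 0 < p0 by exact: ppos.
have p01 : p0 <= 1 by rewrite /p0; lra.
have ps0 := hpos p0 hp0.
set t := fun k : nat => (2^-1 : R) ^+ k.+1.
have t0 : forall k, 0 < t k by move=> k; rewrite /t exprn_gt0 // invr_gt0 ltr0n.
have t1 : forall k, t k <= 1 by move=> k; rewrite /t exprn_ile1 // ?invr_ge0 ?ler0n // invf_le1 ?ler1n.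
have hsel : forall k, exists N, forall m n, (N <= m)%N -> (N <= n)%N ->
    (Ip mu p0 (fun x => (u n x - u m x)%R) <= (((t k * t k `^ p0^-1) `^ p0)%R)%:E)%E.
  move=> k; have [N hN] := H1 (t k * t k `^ p0^-1 / psi p0) (divr_gt0 (mulr_gt0 (t0 k) (powR_gt0 _ (t0 k))) ps0).
  exists N => m n Nm Nn; have := hN m n Nm Nn p0 hp0.
  by rewrite divfK ?gt_eqF.
have [Nf hNf] := choice hsel.
set nk := upseq Nf.
set g := fun k => u (nk k).
set dk := fun k x => g k.+1 x - g k x.
have hd : forall k, (Ip mu p0 (dk k) <= (((t k * t k `^ p0^-1) `^ p0)%R)%:E)%E.
  move=> k; apply: hNf; first exact: upseq_ge.
  exact: leq_trans (upseq_ge Nf k) (upseq_S Nf k).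
have mg : forall k, measurable_fun setT (g k) by move=> k; exact: hu_meas.
have md : forall k, measurable_fun setT (dk k) by move=> k; exact: measurable_funB.
set E := fun k => [set x | t k <= `|dk k x|].
have mE : forall k, measurable (E k).
  move=> k.
  have := (measurableT_comp (@normr_measurable R setT) (md k)) measurableT _ (@measurable_itv _ `[t k, +oo[).
  rewrite setTI; congr measurable; apply/seteqP; split => x /=; by rewrite in_itv /= andbT.
have hmk : forall k, (mu (E k) <= (t k)%:E)%E.
  move=> k.
  have mdE : measurable_fun setT (EFin \o dk k) by apply/measurable_EFinP.
  have fnd : forall x y, x \in `[0%E, +oo[%classic -> y \in `[0%E, +oo[%classic ->
      (x <= y)%E -> (x `^ p0 <= y `^ p0)%E.
    move=> x y; rewrite !inE /= !in_itv /= !andbT => x0 y0 xy.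
    apply: gt0_ler_poweR => //; first exact: ltW.
      by rewrite in_itv /= x0 leey.
    by rewrite in_itv /= y0 leey.
  have := @le_integral_comp_abse _ _ _ mu setT measurableT (EFin \o dk k) (t k) (poweR ^~ p0)
    (measurable_poweR _) (fun r _ => poweR_ge0 r p0) fnd mdE (t0 k).
  rewrite /= setTI.
  have -> : [set x | ((t k)%:E <= (`|dk k x|)%:E)%E] = E k.
    by apply/seteqP; split => x; rewrite /= lee_fin.
  move=> h1.
  have h3 : ((t k * t k `^ p0^-1) `^ p0)%R <= ((t k `^ p0) * t k)%R.
    rewrite (powRM _ (ltW (t0 k)) (powR_ge0 _ _)) -powRrM mulVf ?gt_eqF //.
    by rewrite powRr1 // ltW.
  have : ((t k `^ p0)%:E * mu (E k) <= (t k `^ p0)%:E * (t k)%:E)%E.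
    apply: le_trans h1 _; apply: le_trans (hd k) _.
    by rewrite -EFinM lee_fin.
  by rewrite lee_pmul2l // lte_fin powR_gt0.
have hsum : (\sum_(0 <= k <oo) mu (E k) < +oo)%E.
  apply: (@le_lt_trans _ _ (\sum_(0 <= k <oo | xpredT k) ((1 / (2 ^ k.+1)%:R)%:E))%E).
    apply: lee_nneseries => [i _ _|n _]; first exact: measure_ge0.
    by rewrite (le_trans (hmk n)) // lee_fin /t natrX div1r -exprVn.
  by apply: le_lt_trans (epsilon_trick0 xpredT ler01) _; exact: ltry.
set L := lim_sup_set E.
have mL : measurable L.
  by apply: bigcap_measurable => // n _; apply: bigcup_measurable => j _; exact: mE.
have L0 : mu L = 0%E := lim_sup_set_cvg0 mE hsum.
have notL : forall x, ~ L x -> exists K, forall k, (K <= k)%N -> `|dk k x| < t k.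
  move=> x nL; apply: contrapT => hK; apply: nL => n _.
  apply: contrapT => nE; apply: hK; exists n => k nk0.
  rewrite ltNge; apply/negP => hk; apply: nE; by exists k.
have cvg_g : forall x, ~ L x -> cvgn (g ^~ x).
  move=> x /notL [K hK]; apply: (@cauchy_geo R _ K) => k Kk; exact: hK.
set h := fun k x => (\1_(~` L) x * g k x).
have mh : forall k, measurable_fun setT (h k).
  by move=> k; apply: measurable_funM; [exact: measurable_indic (measurableC mL) | exact: mg].
have hcvx : forall x, cvgn (h ^~ x).
  move=> x; case: (pselect (L x)) => Lx.
    have -> : h ^~ x = fun=> 0.
      apply/funext => k; rewrite /h indicE memNset ?mul0r //=.
    exact: is_cvg_cst.
  have -> : h ^~ x = g ^~ x by apply/funext => k; rewrite /h indicE mem_set ?mul1r.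
  exact: cvg_g.
set f := fun x => limn (h ^~ x).
have hcv : forall x, h ^~ x @ \oo --> f x by move=> x; exact: hcvx.
have mf : measurable_fun setT f := measurable_fun_cvg mh (fun x _ => hcv x).
have M : forall e, 0 < e -> exists N, forall n, (N <= n)%N -> forall p, a < p < b ->
    (Ip mu p (fun x => (u n x - f x)%R) <= (((e * psi p) `^ p)%R)%:E)%E.
  move=> e e0; have [N hN] := H1 e e0; exists N => n Nn p hp.
  have pp := ppos p hp.
  set F := fun k x => ((`|u n x - h k x| `^ p)%R)%:E.
  have mF : forall k, measurable_fun setT (F k).
    move=> k; apply/measurable_EFinP.
    apply: (measurableT_comp (measurable_powR p)).
    apply: (measurableT_comp (@normr_measurable R setT)).
    exact: measurable_funB.
  have F0 : forall k x, setT x -> (0 <= F k x)%E by move=> k x _; rewrite lee_fin powR_ge0.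
  have Fcv : forall x, F ^~ x @ \oo --> ((`|u n x - f x| `^ p)%R)%:E.
    move=> x; apply: cvg_EFin; first exact: nearW.
    apply: powR_cvg_seq => //.
    apply: cvg_norm; apply: cvgB; [exact: cvg_cst | exact: hcv].
  have e1 : Ip mu p (fun x => (u n x - f x)%R) = (\int[mu]_x limn_einf (F ^~ x))%E.
    apply: eq_integral => x _; rewrite is_cvg_limn_einfE; last exact: cvgP _ (Fcv x).
    by rewrite (cvg_lim _ (Fcv x)).
  have e2 := @fatou _ _ _ mu setT measurableT F mF F0.
  have e3 : forall k, (N <= k)%N -> (\int[mu]_x F k x <= (((e * psi p) `^ p)%R)%:E)%E.
    move=> k Nk.
    have -> : (\int[mu]_x F k x = Ip mu p (fun x => (u n x - u (nk k) x)%R))%E.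
      apply: ae_eq_integral => //.
      - apply/measurable_EFinP; apply: (measurableT_comp (measurable_powR p)).
        apply: (measurableT_comp (@normr_measurable R setT)); exact: measurable_funB.
      - exists L; split => // x /= hx; apply: contrapT => nLx; apply: hx => _.
        by rewrite /F /h indicE mem_set ?mul1r.
    apply: hN => //; exact: leq_trans Nk (upseq_k Nf k).
  rewrite e1; apply: le_trans e2 _.
  rewrite limn_einf_lim; apply: lime_le; first exact: is_cvg_einfs.
  near=> k; apply: le_trans (e3 k _).
    by apply: ereal_inf_lbound; exists k => /=.
  by near: k; exists N.
exists f; split => //; last first.
  move=> e e0; have [N hN] := M (e / 2) (divr_gt0 e0 (ltr0Sn _ 1)); exists N => n Nn.
  apply: (@le_lt_trans _ _ (e / 2)%:E); last by rewrite lte_fin; lra.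
  apply: (Gnorm_le mu _ _ _ _ _ hpos) => p hp.
  apply: (Lnorm_le_Ip mu _ _ _ (ppos p hp) _ (hN n Nn p hp)).
  by rewrite mulr_ge0 // ltW // ?hpos // divr_gt0.
have [N hN] := M 1 ltr01.
have Gge0 : (0 <= Gnorm mu a b psi (u N))%E.
  apply: (@le_trans _ _ (Lnorm mu p0%:E (EFin \o u N) * ((psi p0)^-1)%:E)%E).
    by apply: mule_ge0; [exact: Lnorm_ge0 | rewrite lee_fin invr_ge0 ltW].
  by apply: ereal_sup_ubound; exists p0.
set G := fine (Gnorm mu a b psi (u N)).
have GE : Gnorm mu a b psi (u N) = G%:E by rewrite fineK // ge0_fin_numE // hu_fin.
have G0 : 0 <= G by rewrite -lee_fin -GE.
have GEle : (Gnorm mu a b psi (u N) <= G%:E)%E by rewrite GE.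
set K := 4 `^ a^-1 * (1 + G).
apply: (@le_lt_trans _ _ K%:E); last exact: ltry.
apply: (Gnorm_le mu _ _ _ _ _ hpos) => p hp.
have pp := ppos p hp; have psp := hpos p hp.
have p1 : p <= 1 by case/andP: hp => _ pb; apply: le_trans hb1; exact: ltW.
have K0 : 0 <= K by rewrite mulr_ge0 // ?powR_ge0 // addr_ge0.
apply: (Lnorm_le_Ip mu _ _ _ pp); first by rewrite mulr_ge0 // ltW.
have hIN : (Ip mu p (u N) <= (((G * psi p) `^ p)%R)%:E)%E.
  exact: (Ip_le_Lnorm mu _ _ _ pp (mulr_ge0 G0 (ltW psp)) (le_Gnorm mu _ _ _ _ _ _ psp hp GEle)).
have hIf := hN N (leqnn N) p hp.
have mA : measurable_fun setT (fun x => ((`|u N x - f x| `^ p)%R)%:E).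
  apply/measurable_EFinP; apply: (measurableT_comp (measurable_powR p)).
  apply: (measurableT_comp (@normr_measurable R setT)); exact: measurable_funB.
have mB : measurable_fun setT (fun x => ((`|u N x| `^ p)%R)%:E).
  apply/measurable_EFinP; apply: (measurableT_comp (measurable_powR p)).
  exact: (measurableT_comp (@normr_measurable R setT)).
have step : (Ip mu p f <= ((2 * (((1 * psi p) `^ p) + ((G * psi p) `^ p)))%R)%:E)%E.
  apply: (@le_trans _ _ (\int[mu]_x (2%:E * (((`|u N x - f x| `^ p)%R)%:E + ((`|u N x| `^ p)%R)%:E)))%E).
    apply: ge0_le_integral => //.
    - apply/measurable_EFinP; apply: (measurableT_comp (measurable_powR p)).
      exact: (measurableT_comp (@normr_measurable R setT)).
    - by apply: emeasurable_funM => //; apply: emeasurable_funD.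
    - move=> x _; rewrite -EFinD -EFinM lee_fin.
      have ef : f x = (- (u N x - f x) + u N x)%R by ring.
      by rewrite {1}ef; have := @powR_tri R p (- (u N x - f x)) (u N x) pp p1; rewrite normrN.
  rewrite ge0_integralZl_EFin //; try by apply: emeasurable_funD.
  rewrite ge0_integralD //.
    rewrite EFinM; apply: lee_wpmul2l => //.
    by rewrite EFinD; apply: leeD.
  by move=> x _; rewrite adde_ge0 // lee_fin powR_ge0.
apply: (le_trans step); rewrite lee_fin.
have h4 : 4 <= (4 `^ a^-1) `^ p.
  rewrite -powRrM; apply: le1r_powR; first by rewrite ler1n.
  have ha0 : a != 0 by rewrite gt_eqF.
  by rewrite -(mulVf ha0) ler_pM2l ?invr_gt0 // ltW //; case/andP: hp.
have hA1 : 1 <= (1 + G) `^ p.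
  have := @ge0_ler_powR R p (ltW pp) 1 (1 + G); rewrite powR1; apply => //.
  - by rewrite nnegrE.
  - by rewrite nnegrE addr_ge0.
  - by rewrite lerDl.
have hGA : G `^ p <= (1 + G) `^ p.
  apply: ge0_ler_powR => //; first exact: ltW.
  - by rewrite nnegrE addr_ge0.
  - by rewrite lerDr.
rewrite mul1r /K (powRM _ (mulr_ge0 (powR_ge0 _ _) (addr_ge0 ler01 G0)) (ltW psp)).
rewrite (powRM _ (powR_ge0 _ _) (addr_ge0 ler01 G0)) (powRM _ G0 (ltW psp)).
have X0 : 0 <= psi p `^ p by apply: powR_ge0.
have Gp0 : 0 <= G `^ p by apply: powR_ge0.
apply: (@le_trans _ _ (4 * ((1 + G) `^ p * psi p `^ p))).
  nra.
rewrite -mulrA; apply: ler_wpM2r => //.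
by rewrite mulr_ge0 // powR_ge0.
Unshelve. all: by end_near.
Qed.
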